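(* Let $G=K(n_1,\dots,n_s)$ be a complete $s$-partite graph ($s\ge 2$) with parts $V_1,\dots,V_s$, $|V_j|=n_j$, $n_1\ge n_2\ge\cdots\ge n_s$, such that $3\le n_1\le 5$ and $n_2=1$. If $n_1\ge 4$, then there is an optimal $3$-relaxed coloring $f$ of $G$ with $|f(V_1)|=1$. If $n_1=3$, then there is an optimal $3$-relaxed coloring of $G$ which assigns the same color to the three vertices of $V_1$ and the unique vertex of $V_2$.
   Context: A map $f$ from $V(G)$ to a finite set of colors is a $3$-relaxed coloring if every vertex $u$ has at most $3$ neighbors $v$ with $f(v)=f(u)$; it is optimal if it uses the minimum possible number $\chi_3(G)$ of colors. $f(S)$ denotes the set of colors used on $S$. *)

(* Defs.v *)
From mathcomp Require Import all_boot.
Set Implicit Arguments. Unset Strict Implicit. Unset Printing Implicit Defensive.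

(* Complete multipartite graph on a finite vertex type T: the part of a vertex
   is given by p : T -> 'I_s, and u ~ v iff they lie in different parts. *)
Definition cmp_adj (T : finType) (s : nat) (p : T -> 'I_s) : rel T :=
  fun u v => p u != p v.

(* The j-th part (0-indexed: part j here is V_{j+1} of the paper). *)
Definition part (T : finType) (s : nat) (p : T -> 'I_s) (j : nat) : {set T} :=
  [set v | nat_of_ord (p v) == j].

Definition relaxed3 (T C : finType) (e : rel T) (f : T -> C) : Prop :=
  forall u : T, #|[set v | e u v & f v == f u]| <= 3.

Definition colors_on (T C : finType) (f : T -> C) (S : {set T}) : {set C} :=
  f @: S.

Definition ncolors (T C : finType) (f : T -> C) : nat := #|colors_on f [set: T]|.

Definition optimal3 (T C : finType) (e : rel T) (f : T -> C) : Prop :=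
  relaxed3 e f /\
  forall (C' : finType) (g : T -> C'), relaxed3 e g -> ncolors f <= ncolors g.

(* Main.v *)
Require Import Defs.
From mathcomp Require Import all_boot.
From mathcomp Require Import zify.
Set Implicit Arguments. Unset Strict Implicit.

Lemma part_uniq (T : finType) (s : nat) (p : T -> 'I_s) :
  (forall i j, i <= j -> j < s -> #|part p j| <= #|part p i|) -> #|part p 1| = 1 ->
  forall v1 v2, p v1 = p v2 -> 0 < p v1 -> v1 = v2.
Proof.
move=> Hmono H1 v1 v2 Heq Hpos.
have : #|part p (p v1)| <= 1 by rewrite -H1; apply: Hmono => //.
move/card_le1_eqP; apply; rewrite inE ?Heq //.
Qed.

Lemma card_split (T C : finType) (g : T -> C) (A : {set T}) :
  #|A| = \sum_(c in g @: [set: T]) #|[set v in A | g v == c]|.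
Proof.
rewrite -sum1_card (partition_big g (mem (g @: [set: T]))) /=; last first.
  by move=> v _; apply: imset_f; rewrite inE.
apply: eq_bigr => c _; rewrite -sum1_card; apply: eq_bigl => v; rewrite !inE.
by [].
Qed.

Lemma class_le4 (T : finType) (s : nat) (p : T -> 'I_s) (C : finType) (g : T -> C) :
  (forall i j, i <= j -> j < s -> #|part p j| <= #|part p i|) -> #|part p 1| = 1 ->
  relaxed3 (cmp_adj p) g -> forall w, 0 < p w -> #|[set v | g v == g w]| <= 4.
Proof.
move=> Hmono H1 Hg w Hw.
have sub : [set v | g v == g w] \subset w |: [set v | cmp_adj p w v & g v == g w].
  apply/subsetP => v; rewrite !inE => /eqP gv; rewrite gv eqxx andbT.
  case: (eqVneq (p w) (p v)) => [e|ne]; last by rewrite /cmp_adj ne orbT.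
  by rewrite (@part_uniq _ _ _ Hmono H1 _ _ e Hw) eqxx.
apply: (leq_trans (subset_leq_card sub)).
rewrite cardsU1; have := Hg w; case: (_ \notin _) => /=; lia.
Qed.

Lemma lower (T : finType) (s : nat) (p : T -> 'I_s) (C : finType) (g : T -> C) :
  (forall i j, i <= j -> j < s -> #|part p j| <= #|part p i|) -> #|part p 1| = 1 ->
  relaxed3 (cmp_adj p) g ->
  #|~: part p 0| + 4 <= 4 * ncolors g \/ #|part p 0| + #|~: part p 0| <= 4 * ncolors g.
Proof.
move=> Hmono H1 Hg.
set W := ~: part p 0.
have inW v : (v \in W) = (0 < p v) by rewrite !inE lt0n.
have bc c : #|[set v in W | g v == c]| <= 4.
  case: (set_0Vmem [set v in W | g v == c]) => [->|[w]]; first by rewrite cards0.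
  rewrite inE inW => /andP[Hw /eqP gw].
  apply: (leq_trans _ (@class_le4 _ _ _ _ _ Hmono H1 Hg _ Hw)); apply: subset_leq_card.
  by apply/subsetP => v; rewrite !inE gw => /andP[].
rewrite /ncolors /colors_on.
set img := g @: [set: T].
have Hk : #|img| = \sum_(c in img) 1 by rewrite sum1_card.
case: (boolP [exists c, (c \in img) && [forall v, (v \in W) ==> (g v != c)]]).
  case/existsP => c0 /andP[c0img /forallP Hc0]; left.
  have b0 : #|[set v in W | g v == c0]| = 0.
    apply/eqP; rewrite cards_eq0; apply/eqP/setP => v; rewrite in_set in_set0.
    apply/negbTE/andP => -[Hv /eqP e]; have := Hc0 v; by rewrite Hv e eqxx.
  rewrite (@card_split _ _ g W) -/img.
  rewrite (bigD1 c0) //= b0 add0n.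
  rewrite Hk [in X in _ <= X](bigD1 c0) //=.
  rewrite mulnDr muln1 addnC leq_add2l big_distrr /=.
  by apply: leq_sum => c _; rewrite muln1.
move=> Hno; right.
rewrite cardsC -cardsT (@card_split _ _ g [set: T]) -/img Hk big_distrr /=.
apply: leq_sum => c cimg; rewrite muln1.
have : ~~ [forall v, (v \in W) ==> (g v != c)].
  apply: contra Hno => H; apply/existsP; exists c; by rewrite cimg.
case/forallPn => w; rewrite negb_imply negbK => /andP[Hw /eqP gw].
rewrite inW in Hw.
apply: (leq_trans _ (@class_le4 _ _ _ _ _ Hmono H1 Hg _ Hw)); apply: subset_leq_card.
by apply/subsetP => v; rewrite !inE gw.
Qed.

Definition fcol (T : finType) (s : nat) (p : T -> 'I_s) (d : nat) (v : T) : 'I_s.+1 :=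
  inord ((p v + d) %/ 4).

Lemma fcol_eq (T : finType) (s : nat) (p : T -> 'I_s) d u v : d <= 3 ->
  fcol p d u = fcol p d v -> (p u + d) %/ 4 = (p v + d) %/ 4.
Proof.
rewrite /fcol => Hd /(congr1 val) /=; rewrite !inordK //.
  have := ltn_ord (p v); lia.
have := ltn_ord (p u); lia.
Qed.

Lemma ord_neq (s : nat) (a b : 'I_s) : a != b -> (a : nat) <> b.
Proof. by move=> ne e; move/eqP: ne; apply; apply: val_inj. Qed.

Lemma fcol_relaxed (T : finType) (s : nat) (p : T -> 'I_s) d :
  (forall i j, i <= j -> j < s -> #|part p j| <= #|part p i|) -> #|part p 1| = 1 ->
  (d = 2 \/ d = 3) -> (d = 2 -> #|part p 0| <= 3) -> relaxed3 (cmp_adj p) (fcol p d).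
Proof.
move=> Hmono H1 Hd Hn u.
have d3 : d <= 3 by lia.
set S := [set v | cmp_adj p u v & fcol p d v == fcol p d u].
have memS v : v \in S -> (p u : nat) <> p v /\ (p v + d) %/4 = (p u + d) %/ 4.
  rewrite inE /cmp_adj => /andP[ne /eqP e]; split; first exact: ord_neq.
  exact: fcol_eq e.
case: (boolP ((d == 2) && (p u == 1 :> nat))).
  case/andP => /eqP d2 /eqP pu1; apply: leq_trans (Hn d2).
  apply: subset_leq_card; apply/subsetP => v /memS [ne e]; rewrite inE.
  apply/eqP; lia.
move=> Hnot.
have pos v : v \in S -> 0 < p v.
  move=> /memS [ne e]; move: Hnot; case: (d == 2) / eqP; case: (p u == 1 :> nat) / eqP;
  lia.
pose h v : 'I_4 := inord ((p v + d) %% 4).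
have hval v : (h v : nat) = (p v + d) %% 4 by rewrite inordK // ltn_pmod.
have hinj : {in S &, injective h}.
  move=> v1 v2 v1S v2S /(congr1 (@nat_of_ord 4)); rewrite !hval => e.
  have [_ e1] := memS _ v1S; have [_ e2] := memS _ v2S.
  apply: (@part_uniq _ _ _ Hmono H1) (pos _ v1S); apply: val_inj => /=.
  have := divn_eq (p v1 + d) 4; have := divn_eq (p v2 + d) 4; lia.
rewrite -(card_in_imset hinj).
have sub : h @: S \subset [set~ h u].
  apply/subsetP => x /imsetP[v vS ->]; rewrite !inE; apply/eqP => /(congr1 (@nat_of_ord 4)).
  rewrite !hval => e; have [ne e1] := memS _ vS.
  have := divn_eq (p v + d) 4; have := divn_eq (p u + d) 4; lia.
by apply: leq_trans (subset_leq_card sub) _; rewrite cardsC1 card_ord.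
Qed.

Lemma ncol_f (T : finType) (s : nat) (p : T -> 'I_s) d : d <= 3 ->
  ncolors (fcol p d) <= (s - 1 + d) %/ 4 + 1.
Proof.
move=> Hd; rewrite /ncolors /colors_on.
set M := (s - 1 + d) %/ 4.
have sub : fcol p d @: [set: T] \subset [set (inord (val i) : 'I_s.+1) | i : 'I_M.+1].
  apply/subsetP => x /imsetP[v _ ->].
  have le : (p v + d) %/ 4 < M.+1.
    rewrite ltnS /M; apply: leq_div2r; have := ltn_ord (p v); lia.
  apply/imsetP; exists (Ordinal le) => //.
apply: leq_trans (subset_leq_card sub) _.
by apply: leq_trans (leq_imset_card _ _) _; rewrite card_ord addn1.
Qed.

Lemma W_ge (T : finType) (s : nat) (p : T -> 'I_s) :
  (forall j, j < s -> 0 < #|part p j|) -> s - 1 <= #|~: part p 0|.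
Proof.
move=> Hpos.
set P := [set j : 'I_s | 0 < j].
have sub : P \subset p @: (~: part p 0).
  apply/subsetP => j; rewrite inE => jpos.
  have := Hpos j (ltn_ord j); rewrite card_gt0 => /set0Pn [v]; rewrite inE => /eqP pv.
  apply/imsetP; exists v; first by rewrite !inE pv -lt0n.
  by apply: val_inj.
have c1 : #|~: P| <= 1.
  apply/card_le1_eqP => x y; rewrite !inE -!eqn0Ngt => /eqP x0 /eqP y0.
  by apply: val_inj; rewrite /= x0 y0.
have := cardsC P; rewrite card_ord => cP.
have := subset_leq_card sub; have := leq_imset_card p (~: part p 0); lia.
Qed.

Lemma opt (T : finType) (s : nat) (p : T -> 'I_s) d :
  2 <= s ->
  (forall j, j < s -> 0 < #|part p j|) ->
  (forall i j, i <= j -> j < s -> #|part p j| <= #|part p i|) ->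
  #|part p 1| = 1 ->
  (d = 2 \/ d = 3) -> (d = 3 -> 4 <= #|part p 0|) -> (d = 2 -> #|part p 0| = 3) ->
  optimal3 (cmp_adj p) (fcol p d).
Proof.
move=> Hs Hpos Hmono H1 Hd Hd3 Hd2; split.
  apply: fcol_relaxed => //; move=> /Hd2 ->; by [].
move=> C' g Hg.
have := lower Hmono H1 Hg; have := W_ge Hpos.
have : d <= 3 by lia.
move/(ncol_f p).
case: Hd => [e|e]; [have := Hd2 e | have := Hd3 e]; rewrite e; lia.
Qed.

Theorem lemma5p5 (T : finType) (s : nat) (p : T -> 'I_s) :
  2 <= s ->
  (forall j, j < s -> 0 < #|part p j|) ->
  (forall i j, i <= j -> j < s -> #|part p j| <= #|part p i|) ->
  3 <= #|part p 0| <= 5 ->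
  #|part p 1| = 1 ->
  (4 <= #|part p 0| ->
     exists (C : finType) (f : T -> C),
       optimal3 (cmp_adj p) f /\ #|colors_on f (part p 0)| = 1) /\
  (#|part p 0| = 3 ->
     exists (C : finType) (f : T -> C),
       optimal3 (cmp_adj p) f /\
       forall u v, u \in part p 0 :|: part p 1 -> v \in part p 0 :|: part p 1 ->
         f u = f v).
Proof.
move=> Hs Hpos Hmono H05 H1; split.
  move=> H4; exists ('I_s.+1 : finType), (fcol p 3); split.
    apply: opt => //; (by right) || (by left) || (by move=> e; lia).
  have := Hpos 0 (ltnW Hs); rewrite card_gt0 => /set0Pn [v0 v0in].
  have -> : colors_on (fcol p 3) (part p 0) = [set fcol p 3 v0].
    apply/setP => x; rewrite inE; apply/imsetP/eqP => [[v vin ->]|->]; last by exists v0.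
    by move: vin v0in; rewrite !inE /fcol => /eqP -> /eqP ->.
  by rewrite cards1.
move=> H3; exists ('I_s.+1 : finType), (fcol p 2); split.
  apply: opt => //; (by right) || (by left) || (by move=> e; lia).
have z v : v \in part p 0 :|: part p 1 -> fcol p 2 v = inord 0.
  rewrite !inE /fcol => Hv; congr inord.
  have : (p v : nat) <= 1 by case/orP: Hv => /eqP ->.
  lia.
by move=> u v /z -> /z ->.
Qed.
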